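(* Let $\varepsilon>0$ and $c>0$ be constants, and let $\ell=\ell(n)$ be integers with $0\le \ell\le C_0 n^{1/2-\varepsilon}$ for some constant $C_0$. Then there is a constant $m$ (depending only on $\varepsilon,c$) such that, for all sufficiently large $n$, there is a randomized procedure $s$ with the following properties: on input $x\in\{0,1\}^n$ it queries $\mathrm{Jump}_\ell$ at $x$ and at at most $m$ further points, each sampled independently from a unary unbiased distribution applied to $x$; its output $s(x)$ depends only on the observed fitness values (and $n,\ell$); and for every $x\in\{0,1\}^n$, $\Pr[s(x)=|x|_1]\ge 1-O(n^{-c})$.
   Context: For $x\in\{0,1\}^n$ let $|x|_1=\sum_i x_i$. For an integer $0\le\ell<n/2$, $\mathrm{Jump}_\ell:\{0,1\}^n\to\mathbb{R}$ is defined by $\mathrm{Jump}_\ell(x)=n$ if $|x|_1=n$, $\mathrm{Jump}_\ell(x)=|x|_1$ if $\ell<|x|_1<n-\ell$, and $\mathrm{Jump}_\ell(x)=0$ otherwise. A unary unbiased distribution is a family $(D(\cdot\mid y))_{y\in\{0,1\}^n}$ of probability distributions on $\{0,1\}^n$ with $D(x\mid y)=D(x\oplus z\mid y\oplus z)$ for all $x,y,z$ ($\oplus$ = bitwise XOR) and $D(x\mid y)=D(\sigma(x)\mid\sigma(y))$ for all permutations $\sigma$ of $[n]$, where $\sigma(x)=x_{\sigma(1)}\cdots x_{\sigma(n)}$. *)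

(* Defs.v *)
From Stdlib Require Import Reals.
From mathcomp Require Import all_boot all_fingroup.

Set Implicit Arguments.
Unset Strict Implicit.
Unset Printing Implicit Defensive.

Definition bv (n : nat) := {ffun 'I_n -> bool}.

Definition ones (n : nat) (x : bv n) : nat := #|[pred i | x i]|.

Definition jump (n l : nat) (x : bv n) : R :=
  if ones x == n then INR n
  else if (l < ones x) && (ones x < n - l) then INR (ones x)
  else R0.

Definition bxor (n : nat) (x z : bv n) : bv n := [ffun i => xorb (x i) (z i)].

Definition bperm (n : nat) (s : {perm 'I_n}) (x : bv n) : bv n :=
  [ffun i => x (s i)].

Definition Rsum (T : finType) (P : pred T) (F : T -> R) : R :=
  \big[Rplus/R0]_(t : T | P t) F t.
Definition Rprod (m : nat) (F : 'I_m -> R) : R :=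
  \big[Rmult/R1]_(i < m) F i.

(* D x y = D(x | y): a family of probability distributions on {0,1}^n
   indexed by y, which is unary unbiased. *)
Definition unary_unbiased (n : nat) (D : bv n -> bv n -> R) : Prop :=
  (forall x y, Rle R0 (D x y)) /\
  (forall y, Rsum predT (fun x => D x y) = R1) /\
  (forall x y z, D x y = D (bxor x z) (bxor y z)) /\
  (forall x y (s : {perm 'I_n}), D x y = D (bperm s x) (bperm s y)).

(* Probability that the non-adaptive procedure that evaluates Jump_l at x,
   samples y_i ~ Ds i (. | x) independently (i < m), and outputs
   g (Jump_l x) (fun i => Jump_l y_i), outputs |x|_1. *)
Definition success_prob (n l m : nat) (Ds : 'I_m -> bv n -> bv n -> R)
    (g : R -> ('I_m -> R) -> nat) (x : bv n) : R :=
  Rsum (fun ys : {ffun 'I_m -> bv n} =>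
          g (jump l x) (fun i => jump l (ys i)) == ones x)
       (fun ys => Rprod (fun i => Ds i (ys i) x)).

(* Main.v *)
Set Warnings "-notation-overridden".
From HB Require Import structures.
Require Import Defs.
From Stdlib Require Import Reals Lra ZArith Psatz ClassicalEpsilon FunctionalExtensionality.
From mathcomp Require Import all_boot all_fingroup.
From mathcomp Require Import zify.
Set Implicit Arguments.
Unset Strict Implicit.
Unset Printing Implicit Defensive.
HB.instance Definition _ := Monoid.isComLaw.Build R R0 Rplus (fun a b c => esym (Rplus_assoc a b c)) Rplus_comm Rplus_0_l.
HB.instance Definition _ := Monoid.isComLaw.Build R R1 Rmult (fun a b c => esym (Rmult_assoc a b c)) Rmult_comm Rmult_1_l.
HB.instance Definition _ := Monoid.isMulLaw.Build R R0 Rmult Rmult_0_l Rmult_0_r.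
HB.instance Definition _ := Monoid.isAddLaw.Build R Rmult Rplus Rmult_plus_distr_r Rmult_plus_distr_l.

Lemma Rsum_le (T : finType) (P : pred T) (F G : T -> R) :
  (forall t, P t -> Rle (F t) (G t)) ->
  Rle (\big[Rplus/R0]_(t | P t) F t) (\big[Rplus/R0]_(t | P t) G t).
Proof.
move=> H; apply: (big_ind2 (fun a b => Rle a b)).
- by apply: Rle_refl.
- by move=> *; apply: Rplus_le_compat.
- exact: H.
Qed.

Lemma Rsum_ge0 (T : finType) (P : pred T) (F : T -> R) :
  (forall t, P t -> Rle R0 (F t)) -> Rle R0 (\big[Rplus/R0]_(t | P t) F t).
Proof.
move=> H; apply: (big_ind (fun a => Rle R0 a)).
- by apply: Rle_refl.
- by move=> *; lra.
- exact: H.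
Qed.

Lemma Rsum_sub (T : finType) (P Q : pred T) (F : T -> R) :
  (forall t, P t -> Q t) -> (forall t, Rle R0 (F t)) ->
  Rle (\big[Rplus/R0]_(t | P t) F t) (\big[Rplus/R0]_(t | Q t) F t).
Proof.
move=> PQ F0; rewrite [X in Rle X _]big_mkcond [X in Rle _ X]big_mkcond /=.
apply: Rsum_le => t _; case: ifP => Pt; first by rewrite PQ //; lra.
by case: ifP => _; [apply: F0 | apply: Rle_refl].
Qed.

Lemma Rsum_const (T : finType) (P : pred T) (a : R) :
  \big[Rplus/R0]_(t | P t) a = Rmult (INR #|P|) a.
Proof.
rewrite big_const; elim: #|P| => [|k IH] /=; first by rewrite Rmult_0_l.
by rewrite IH -/(INR k.+1) S_INR; ring.
Qed.
Lemma card_bigcup_le (T I : finType) (P : pred I) (S : I -> {set T}) :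
  #|\bigcup_(i | P i) S i| <= \sum_(i | P i) #|S i|.
Proof.
elim/big_rec2: _ => [|i k U _ le]; first by rewrite cards0.
by rewrite (leq_trans (leq_card_setU (S i) U).1) ?leq_add2l.
Qed.

Section Comb.
Variable n : nat.
Definition setof (z : bv n) : {set 'I_n} := [set i | z i].

Lemma onesE (z : bv n) : ones z = #|setof z|.
Proof. by rewrite /ones /setof cardsE. Qed.

Lemma setof_inj : injective setof.
Proof.
move=> a b H; apply/ffunP => i.
have: (i \in setof a) = (i \in setof b) by rewrite H.
by rewrite !inE.
Qed.

Lemma card_ones (d : nat) : #|[set z : bv n | ones z == d]| = 'C(n, d).
Proof.
rewrite -(card_imset _ setof_inj) -[in RHS](card_ord n) -card_draws.
apply: eq_card => A; rewrite !inE; apply/imsetP/idP.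
- by case=> z; rewrite inE onesE => /eqP <- ->.
- move=> HA; exists [ffun i => i \in A]; last first.
    by apply/setP => i; rewrite !inE ffunE.
  rewrite inE onesE; suff ->: setof [ffun i => i \in A] = A by [].
  by apply/setP => i; rewrite !inE ffunE.
Qed.

Lemma ones_xor (x z : bv n) :
  ones (bxor x z) + 2 * #|setof x :&: setof z| = ones x + ones z.
Proof.
rewrite !onesE.
have ->: setof (bxor x z) = (setof x :\: setof z) :|: (setof z :\: setof x).
  by apply/setP => i; rewrite !inE ffunE; case: (x i); case: (z i).
have H0: (setof x :\: setof z) :&: (setof z :\: setof x) = set0.
  by apply/setP => i; rewrite !inE; case: (x i); case: (z i).
rewrite cardsU H0 cards0 !cardsD [setof z :&: _]setIC.
have h1 := subset_leq_card (subsetIl (setof x) (setof z)).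
have h2 := subset_leq_card (subsetIr (setof x) (setof z)).
lia.
Qed.

Lemma ones_perm (s : {perm 'I_n}) (z : bv n) : ones (bperm s z) = ones z.
Proof.
rewrite !onesE -(@card_preimset _ s (setof z) perm_inj); apply: eq_card => i.
by rewrite !inE ffunE.
Qed.

Lemma xor_inv (x z : bv n) : bxor x (bxor x z) = z.
Proof. by apply/ffunP => i; rewrite !ffunE; case: (x i); case: (z i). Qed.

Lemma xor_inj (x : bv n) : injective (bxor x).
Proof. by move=> a b H; rewrite -(xor_inv x a) H xor_inv. Qed.

Definition fcnt (d : nat) (i : 'I_n) := #|[set z : bv n | (ones z == d) && z i]|.

Lemma fcnt_sym d i j : fcnt d i = fcnt d j.
Proof.
rewrite /fcnt.
have inj : injective (bperm (tperm i j)).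
  move=> a b H; apply/ffunP => k.
  have := congr1 (fun f : bv n => f (tperm i j k)) H.
  by rewrite !ffunE tpermK.
rewrite -(card_preimset _ inj); apply: eq_card => z.
by rewrite !inE ones_perm ffunE tpermL.
Qed.

Lemma fcnt_sum d : \sum_(i < n) fcnt d i = d * 'C(n, d).
Proof.
transitivity (\sum_(i < n) \sum_(z : bv n | ones z == d) (z i : nat)).
  apply: eq_bigr => i _; rewrite /fcnt -sum1_card big_mkcond /=.
  rewrite [RHS]big_mkcond /=; apply: eq_bigr => z _.
  by rewrite inE; case: (ones z == d); case: (z i).
rewrite exchange_big /= -card_ones -sum1_card big_distrr /=.
apply: eq_big => z; first by rewrite inE.
move=> /eqP <-; rewrite muln1 /ones -sum1_card big_mkcond /=.
by rewrite [RHS]big_mkcond; apply: eq_bigr => i _; rewrite inE; case: (z i).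
Qed.

Lemma fcnt_val d i : n * fcnt d i = d * 'C(n, d).
Proof.
rewrite -fcnt_sum (eq_bigr (fun _ => fcnt d i)); last by move=> j _; apply: fcnt_sym.
by rewrite sum_nat_const card_ord.
Qed.

Lemma union_bound d (A : {set 'I_n}) :
  n * #|[set z : bv n | (ones z == d) && [exists i in A, z i]]| <= #|A| * (d * 'C(n, d)).
Proof.
apply: (@leq_trans (n * \sum_(i in A) fcnt d i)).
  rewrite leq_mul2l; apply/orP; right.
  apply: leq_trans (card_bigcup_le _ _); apply: subset_leq_card.
  apply/subsetP => z; rewrite inE => /andP [Hd /existsP [i /andP [iA zi]]].
  by apply/bigcupP; exists i => //; rewrite inE Hd.
rewrite big_distrr /= (eq_bigr (fun _ => d * 'C(n, d))).
  by rewrite sum_nat_const.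
by move=> i _; apply: fcnt_val.
Qed.
End Comb.

Definition Rnat (r : R) : nat := epsilon (inhabits 0%N) (fun k : nat => INR k = r).

Lemma Rnat_INR k : Rnat (INR k) = k.
Proof.
rewrite /Rnat; apply: INR_eq; apply: (epsilon_spec (inhabits 0%N) (fun k0 : nat => INR k0 = INR k)).
by exists k.
Qed.

Section Dec.
Variables (n l m : nat).
Definition jnat (y : bv n) : nat :=
  if ones y == n then n else if (l < ones y) && (ones y < n - l) then ones y else 0.

Lemma jumpE (y : bv n) : jump l y = INR (jnat y).
Proof. by rewrite /jump /jnat; case: ifP => _ //; case: ifP. Qed.

Definition gdecu (a : nat) (u : 'I_m -> nat) : nat :=
  if a != 0 then a else
  if [exists i, (0 < u i) && (u i * 2 < n)] then \max_(i | u i * 2 < n) u i - l.+1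
  else n - \max_(i | (n <= u i * 2) && (u i < n)) (n - u i) + l.+1.

Definition gdec (a : R) (vs : 'I_m -> R) : nat := gdecu (Rnat a) (fun i => Rnat (vs i)).

Definition badA (x : bv n) : {set 'I_n} :=
  if ones x * 2 < n then setof x else ~: setof x.

Definition bad (x y : bv n) : bool := [exists j in badA x, bxor x y j].

Lemma ones_y (x y : bv n) :
  ones y + 2 * #|setof x :&: setof (bxor x y)| = ones x + ones (bxor x y).
Proof. by rewrite -ones_xor xor_inv. Qed.

Lemma dec_correct (x : bv n) (ys : {ffun 'I_m -> bv n}) :
  4 * l + 3 <= n ->
  (forall i, ones (bxor x (ys i)) = l.+1) ->
  (exists i0, ~~ bad x (ys i0)) ->
  gdec (jump l x) (fun i => jump l (ys i)) = ones x.
Proof.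
move=> Hn Hd [i0 Hi0]; rewrite /gdec jumpE Rnat_INR.
have ->: (fun i => Rnat (jump l (ys i))) = (fun i => jnat (ys i)).
  by apply: functional_extensionality => i; rewrite jumpE Rnat_INR.
rewrite /gdecu.
case: ifP => [Hnz|/negbFE/eqP Hz].
  by move: Hnz; rewrite /jnat; case: ifP => [/eqP -> //|_]; case: ifP.
move: Hz; rewrite {1}/jnat; case: ifP => [/eqP kn|/negbT kn']; first by lia.
have kle : ones x <= n by rewrite /ones; apply: leq_trans (max_card _) _; rewrite card_ord.
have kn : ones x < n by rewrite ltn_neqAle kn' kle.
case: ifP => [km k0|/negbT kmid _]; first by move: km; rewrite k0.
have Hint i := subset_leq_card (subsetIr (setof x) (setof (bxor x (ys i)))).
have Hint2 i := subset_leq_card (subsetIl (setof x) (setof (bxor x (ys i)))).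
have Hy i := ones_y x (ys i).
have Hx0 := Hy i0; have Hi1 := Hint i0.
rewrite !onesE in Hx0 Hi1.
move: Hi0; rewrite /bad /badA; case: ifP => small Hnb.
-
  have E0 : setof x :&: setof (bxor x (ys i0)) = set0.
    apply/setP => j; rewrite !inE; apply/negP => /andP [xj zj].
    by move/existsP: Hnb; apply; exists j; rewrite inE xj zj.
  have o0 : ones (ys i0) = ones x + l.+1.
    by have := Hy i0; rewrite E0 cards0 Hd; lia.
  have ub i : ones (ys i) <= ones x + l.+1.
    by have := Hy i; rewrite Hd; lia.
  have kl : ones x <= l by move: kmid small; lia.
  have u0 : jnat (ys i0) = ones x + l.+1.
    rewrite /jnat o0; case: ifP => [/eqP|_]; first by lia.
    by case: ifP => //; lia.
  have ui i : jnat (ys i) <= ones x + l.+1.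
    have := ub i; rewrite /jnat; case: ifP => [/eqP|_]; first by lia.
    by case: ifP => // _; lia.
  have Ex : [exists i, (0 < jnat (ys i)) && (jnat (ys i) * 2 < n)].
    by apply/existsP; exists i0; rewrite u0; apply/andP; split; lia.
  rewrite Ex.
  suff ->: \max_(i | jnat (ys i) * 2 < n) jnat (ys i) = ones x + l.+1 by lia.
  apply/eqP; rewrite eqn_leq; apply/andP; split.
    by apply/bigmax_leqP => i _; apply: ui.
  by rewrite -{1}u0; apply: leq_bigmax_cond; rewrite u0; lia.
-
  have E0 : setof x :&: setof (bxor x (ys i0)) = setof (bxor x (ys i0)).
    apply/setP => j; rewrite !inE; case zj: (bxor x (ys i0) j); rewrite ?andbF ?andbT //.
    apply/negPn/negP => xj; move/existsP: Hnb; apply; exists j.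
    by rewrite in_setC inE zj xj.
  have o0 : ones (ys i0) = ones x - l.+1.
    by have := Hy i0; rewrite E0 -onesE Hd; lia.
  have lb i : ones x - l.+1 <= ones (ys i).
    by have := Hy i; have := Hint i; rewrite -!onesE Hd; lia.
  have kl : n - l <= ones x by move: kmid small; lia.
  have u0 : jnat (ys i0) = ones x - l.+1.
    rewrite /jnat o0; case: ifP => [/eqP|_]; first by lia.
    by case: ifP => //; lia.
  have ui i : jnat (ys i) = 0 \/ jnat (ys i) = n \/ (jnat (ys i) = ones (ys i)).
    rewrite /jnat; case: ifP => _; first by auto.
    by case: ifP => _; auto.
  case: ifP => [/existsP [i /andP []]|_].
    have := lb i; case: (ui i) => [->|[->|->]]; lia.
  suff ->: \max_(i | (n <= jnat (ys i) * 2) && (jnat (ys i) < n)) (n - jnat (ys i)) = n - (ones x - l.+1) by lia.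
  apply/eqP; rewrite eqn_leq; apply/andP; split.
    apply/bigmax_leqP => i /andP [h1 h2].
    have := lb i; case: (ui i) => [e|[e|->]]; rewrite ?e in h1 h2 *; lia.
  rewrite -{1}u0; apply: leq_bigmax_cond; rewrite u0; apply/andP; split; lia.
Qed.
End Dec.

Definition Dd (n d : nat) (y x : bv n) : R :=
  if ones (bxor x y) == d then Rinv (INR 'C(n, d)) else R0.

Lemma Rsum_D n d (P : pred (bv n)) (x : bv n) :
  \big[Rplus/R0]_(y | P y) Dd d y x =
  Rmult (INR #|[set y | P y && (ones (bxor x y) == d)]|) (Rinv (INR 'C(n, d))).
Proof.
rewrite /Dd -big_mkcondr Rsum_const; congr (Rmult (INR _) _).
by apply: eq_card => y; rewrite inE.
Qed.

Lemma card_xor n (x : bv n) (Q : pred (bv n)) :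
  #|[set y | Q (bxor x y)]| = #|[set z | Q z]|.
Proof.
rewrite -(@card_preimset _ (bxor x) [set z | Q z] (@xor_inj n x)).
by apply: eq_card => y; rewrite !inE.
Qed.

Lemma Cpos n d : (d <= n)%N -> Rlt R0 (INR 'C(n, d)).
Proof. by move=> h; apply: lt_0_INR; apply/ltP; rewrite bin_gt0. Qed.

Lemma D_uu n d : (d <= n)%N -> unary_unbiased (Dd (n:=n) d).
Proof.
move=> dn; have Cp := Cpos dn.
split; [|split; [|split]].
- move=> x y; rewrite /Dd; case: ifP => _; last by apply: Rle_refl.
  by left; apply: Rinv_0_lt_compat.
- move=> y; rewrite /Rsum Rsum_D.
  have ->: #|[set x | predT x && (ones (bxor y x) == d)]| = 'C(n, d).
    by rewrite -card_ones (card_xor y (fun z => ones z == d)).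
  by apply: Rinv_r; apply: Rgt_not_eq.
- move=> x y z; rewrite /Dd.
  suff ->: bxor (bxor y z) (bxor x z) = bxor y x by [].
  by apply/ffunP => i; rewrite !ffunE; case: (x i); case: (y i); case: (z i).
- move=> x y s; rewrite /Dd.
  suff ->: bxor (bperm s y) (bperm s x) = bperm s (bxor y x) by rewrite ones_perm.
  by apply/ffunP => i; rewrite !ffunE.
Qed.

Lemma prob_bad n d (x : bv n) : (d <= n)%N -> (0 < n)%N ->
  Rle (\big[Rplus/R0]_(y | (ones (bxor x y) != d) || bad x y) Dd d y x)
      (Rdiv (INR (#|badA x| * d)) (INR n)).
Proof.
move=> dn n0; have Cp := Cpos dn; rewrite Rsum_D.
have ->: #|[set y | ((ones (bxor x y) != d) || bad x y) && (ones (bxor x y) == d)]|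
   = #|[set z : bv n | (ones z == d) && [exists j in badA x, z j]]|.
  rewrite -(card_xor x); apply: eq_card => y; rewrite !inE /bad.
  rewrite xor_inv; by case: (ones y == d); rewrite ?andbF ?andbT.
have ub := union_bound d (badA x).
have np : Rlt R0 (INR n) by apply: lt_0_INR; apply/ltP.
set S := #|_| in ub *.
have H : Rle (INR S * INR n) (INR (#|badA x| * d) * INR 'C(n, d)).
  rewrite -!mult_INR; apply: le_INR; apply/leP; lia.
have hC := Rgt_not_eq _ _ Cp; have hn := Rgt_not_eq _ _ np.
have e1 : Rmult (INR S) (Rinv (INR 'C(n, d))) = Rmult (Rmult (INR S) (INR n)) (Rmult (Rinv (INR 'C(n, d))) (Rinv (INR n))) by field.
have e2 : Rdiv (INR (#|badA x| * d)) (INR n) = Rmult (Rmult (INR (#|badA x| * d)) (INR 'C(n, d))) (Rmult (Rinv (INR 'C(n, d))) (Rinv (INR n))) by field.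
rewrite e1 e2; apply: Rmult_le_compat_r => //.
by apply: Rmult_le_pos; left; apply: Rinv_0_lt_compat.
Qed.

Lemma prod_le m (q : R) (a : 'I_m -> R) :
  (forall i, Rle R0 (a i) /\ Rle (a i) q) ->
  Rle (\big[Rmult/R1]_(i < m) a i) (pow q m).
Proof.
move=> H.
have ->: pow q m = \big[Rmult/R1]_(i < m) q.
  rewrite big_const_ord; elim: m {H a} => //= k ->; by [].
have: Rle R0 (\big[Rmult/R1]_(i < m) a i) /\ Rle (\big[Rmult/R1]_(i < m) a i) (\big[Rmult/R1]_(i < m) q).
  apply: (big_ind2 (fun u v => Rle R0 u /\ Rle u v)).
  - split; [lra | apply: Rle_refl].
  - move=> u1 u2 v1 v2 [h1 h2] [h3 h4]; split; first by apply: Rmult_le_pos.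
    by apply: Rmult_le_compat.
  - by move=> i _; apply: H.
by case.
Qed.

Lemma prod_ge0 m (a : 'I_m -> R) :
  (forall i, Rle R0 (a i)) -> Rle R0 (\big[Rmult/R1]_(i < m) a i).
Proof.
move=> H; apply: (big_ind (fun u => Rle R0 u)); first lra.
  by move=> *; apply: Rmult_le_pos.
by move=> i _; apply: H.
Qed.

Lemma Dd_ge0 n d (y x : bv n) : (d <= n)%N -> Rle R0 (Dd d y x).
Proof.
move=> dn; rewrite /Dd; case: ifP => _; last by apply: Rle_refl.
by left; apply: Rinv_0_lt_compat; apply: Cpos.
Qed.

Lemma gdec_mid n l m (x : bv n) vs : jnat l x != 0 ->
  gdec n l (m:=m) (jump l x) vs = ones x.
Proof.
rewrite /gdec /gdecu jumpE Rnat_INR => h; rewrite h.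
by move: h; rewrite /jnat; case: ifP => [/eqP -> //|_]; case: ifP.
Qed.

Lemma badA_card n l (x : bv n) : (4 * l + 3 <= n)%N -> jnat l x = 0 -> (#|badA x| <= l)%N.
Proof.
move=> Hn.
have kle : (ones x <= n)%N by rewrite /ones; apply: leq_trans (max_card _) _; rewrite card_ord.
rewrite /jnat /badA; case: ifP => [/eqP kn|_]; first by lia.
case: ifP => [km k0|/negbT km _]; first by move: km; rewrite k0.
case: ifP => sm; first by rewrite -onesE; lia.
have := cardsC (setof x); rewrite card_ord -onesE; lia.
Qed.

Lemma main_prob n l m (x : bv n) : (4 * l + 3 <= n)%N ->
  Rle (Rminus R1 (pow (Rdiv (INR (l * l.+1)) (INR n)) m))
      (success_prob l (fun _ : 'I_m => Dd l.+1) (gdec n l (m:=m)) x).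
Proof.
move=> Hn; have dn : (l.+1 <= n)%N by lia.
have n0 : (0 < n)%N by lia.
have np : Rlt R0 (INR n) by apply: lt_0_INR; apply/ltP.
have q0 : Rle R0 (Rdiv (INR (l * l.+1)) (INR n)).
  by apply: Rmult_le_pos; [apply: pos_INR | left; apply: Rinv_0_lt_compat].
rewrite /success_prob /Rsum /Rprod.
set F := fun ys : {ffun 'I_m -> bv n} => \big[Rmult/R1]_(i < m) Dd l.+1 (ys i) x.
set good := fun ys : {ffun 'I_m -> bv n} =>
  gdec n l (jump l x) (fun i => jump l (ys i)) == ones x.
have F0 ys : Rle R0 (F ys) by apply: prod_ge0 => i; apply: Dd_ge0.
have tot : \big[Rplus/R0]_(ys : {ffun 'I_m -> bv n}) F ys = R1.
  have := bigA_distr_bigA (R:=R) (I:='I_m) (J:=bv n) (fun _ y => Dd l.+1 y x).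
  move=> <-; rewrite big1 //.
  move=> i _; have [_ [h _]] := D_uu dn; exact: h.
rewrite (bigID good) /= in tot.
set bad' := fun y : bv n => (ones (bxor x y) != l.+1) || bad x y.
suff: Rle (\big[Rplus/R0]_(ys | ~~ good ys) F ys) (pow (Rdiv (INR (l * l.+1)) (INR n)) m).
  move: tot; set A := \big[Rplus/R0]_(i | good i) F i; set B := \big[Rplus/R0]_(i | ~~ good i) F i.
  rewrite /Rminus; move=> *; lra.
case: (eqVneq (jnat l x) 0) => [jx|jx]; last first.
  rewrite big_pred0; first by apply: pow_le.
  by move=> ys; rewrite /good gdec_mid ?eqxx.
apply: (@Rle_trans _ (\big[Rplus/R0]_(ys : {ffun 'I_m -> bv n} | [forall i, bad' (ys i)]) F ys)).
  rewrite [X in Rle X _]big_mkcond [X in Rle _ X]big_mkcond /=.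
  apply: Rsum_le => ys _.
  case: ifP => [ng|_]; last by case: ifP => _; [apply: F0 | apply: Rle_refl].
  case: ifP => [_|/negbT nb]; first by apply: Rle_refl.
  case: (boolP [forall i, ones (bxor x (ys i)) == l.+1]) => supp.
    exfalso; move/negP: ng; apply; apply/eqP; apply: dec_correct => //.
      by move=> i; apply/eqP; move/forallP: supp; apply.
    move: nb; rewrite negb_forall => /existsP [i0 hi0]; exists i0.
    by move: hi0; rewrite /bad' negb_or => /andP [].
  move: supp; rewrite negb_forall => /existsP [i0 hi0].
  rewrite /F (bigD1 i0) //= {1}/Dd (negbTE hi0) Rmult_0_l; apply: Rle_refl.
have ->: \big[Rplus/R0]_(ys : {ffun 'I_m -> bv n} | [forall i, bad' (ys i)]) F ys =
   \big[Rmult/R1]_(i < m) \big[Rplus/R0]_(y | bad' y) Dd l.+1 y x.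
  rewrite bigA_distr_big; apply: eq_bigl => ys.
  by apply/forallP/familyP => h i; apply: (h i).
apply: prod_le => i; split; first by apply: Rsum_ge0 => y _; apply: Dd_ge0.
apply: Rle_trans (prob_bad x dn n0) _.
apply: Rmult_le_compat_r; first by left; apply: Rinv_0_lt_compat.
apply: le_INR; apply/leP; rewrite leq_mul2r; apply/orP; right; exact: badA_card.
Qed.

Section RealPart.
Local Open Scope R_scope.

Lemma nat_above (r : R) : exists N : nat, r < INR N.
Proof.
have [h _] := archimed r.
case: (Z_lt_le_dec (up r) 0) => hz.
  exists 0%N; simpl; have := IZR_lt _ _ hz; lra.
exists (Z.to_nat (up r)); rewrite INR_IZR_INZ Z2Nat.id //.
Qed.

Lemma sizeN (C0 a : R) (L n : nat) : a <= /2 -> (1 <= n)%N ->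
  INR L <= C0 * Rpower (INR n) a ->
  (4 * Rabs C0 + 3) * (4 * Rabs C0 + 3) <= INR n ->
  (4 * L + 3 <= n)%N.
Proof.
move=> ha n1 hL hN.
have np : 0 < INR n by apply: lt_0_INR; apply/ltP.
have n1' : 1 <= INR n by apply: (le_INR 1); apply/leP.
have ht : Rpower (INR n) a <= sqrt (INR n).
  by rewrite -Rpower_sqrt //; apply: Rle_Rpower.
have tp : 0 < Rpower (INR n) a by apply: exp_pos.
have hL2 : INR L <= Rabs C0 * sqrt (INR n).
  apply: Rle_trans hL _; apply: Rle_trans (_ : Rabs C0 * Rpower (INR n) a <= _).
    by apply: Rmult_le_compat_r; [lra | apply: RRle_abs].
  by apply: Rmult_le_compat_l => //; apply: Rabs_pos.
have s1 : 4 * Rabs C0 + 3 <= sqrt (INR n).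
  rewrite -(sqrt_square (4 * Rabs C0 + 3)); first by apply: sqrt_le_1_alt.
  have := Rabs_pos C0; lra.
have ss := sqrt_sqrt (INR n) (Rlt_le _ _ np).
have sn1 : 1 <= sqrt (INR n) by have := Rabs_pos C0; lra.
have : INR (4 * L + 3) <= INR n.
  rewrite plus_INR mult_INR; simpl INR.
  have := Rabs_pos C0; nra.
by move/INR_le => /leP.
Qed.

Lemma qbound (C0 eps c : R) (L n m : nat) : 0 < eps -> 0 < c -> c <= 2 * eps * INR m ->
  (1 <= n)%N -> INR L <= C0 * Rpower (INR n) (/ INR 2 - eps) ->
  pow (INR (L * L.+1) / INR n) m <= pow (2 * (C0 * C0)) m * Rpower (INR n) (- c).
Proof.
move=> he hc hm n1 hL.
have np : 0 < INR n by apply: lt_0_INR; apply/ltP.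
have n1' : 1 <= INR n by apply: (le_INR 1); apply/leP.
set t := Rpower (INR n) (/ INR 2 - eps) in hL.
have tp : 0 < t by apply: exp_pos.
set s := Rpower (INR n) (- (2 * eps)).
have tt : t * t = INR n * s.
  rewrite /t /s -Rpower_plus -{2}(Rpower_1 (INR n)) // -Rpower_plus; congr Rpower.
  simpl INR; field.
have L0 : 0 <= INR L by apply: pos_INR.
have hq : INR (L * L.+1) <= 2 * (C0 * C0) * (INR n * s).
  rewrite mult_INR S_INR -tt.
  case: L hL L0 => [|L'] hL L0; first by simpl; nra.
  have : 1 <= INR L'.+1 by apply: (le_INR 1); apply/leP.
  nra.
have sp : 0 < s by apply: exp_pos.
have q0 : 0 <= INR (L * L.+1) / INR n.
  by apply: Rmult_le_pos; [apply: pos_INR | left; apply: Rinv_0_lt_compat].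
have hq2 : INR (L * L.+1) / INR n <= 2 * (C0 * C0) * s.
  apply: (Rmult_le_reg_r (INR n)) => //.
  rewrite /Rdiv Rmult_assoc Rinv_l; last by apply: Rgt_not_eq.
  lra.
apply: Rle_trans (pow_incr _ _ m (conj q0 hq2)) _.
rewrite Rpow_mult_distr; apply: Rmult_le_compat_l.
  by apply: pow_le; nra.
rewrite /s -Rpower_pow // Rpower_mult; apply: Rle_Rpower => //; nra.
Qed.
End RealPart.

Theorem lemma3 :
  forall eps c : R, Rlt R0 eps -> Rlt R0 c ->
  exists m : nat,
  forall (C0 : R) (l : nat -> nat),
    (forall n : nat,
       Rle (INR (l n)) (Rmult C0 (Rpower (INR n) (Rminus (Rinv (INR 2)) eps)))) ->
    exists (K : R) (N0 : nat),
    forall n : nat, (N0 <= n)%N ->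
      exists (Ds : 'I_m -> bv n -> bv n -> R) (g : R -> ('I_m -> R) -> nat),
        (forall i, unary_unbiased (Ds i)) /\
        (forall x : bv n,
           Rle (Rminus R1 (Rmult K (Rpower (INR n) (Ropp c))))
               (success_prob (l n) Ds g x)).
Proof.
move=> eps c he hc.
have [m hm] := nat_above (Rdiv c (Rmult 2 eps)).
exists m => C0 l hl.
have hm' : Rle c (Rmult (Rmult 2 eps) (INR m)).
  have e2 : Rlt R0 (Rmult 2 eps) by lra.
  move: hm; rewrite /Rdiv => hm.
  have := Rmult_lt_compat_l _ _ _ e2 hm.
  rewrite -Rmult_assoc (Rmult_comm (Rmult 2 eps)) Rmult_assoc Rinv_r; last by apply: Rgt_not_eq.
  lra.
have [N hN] := nat_above (Rmult (Rplus (Rmult 4 (Rabs C0)) 3) (Rplus (Rmult 4 (Rabs C0)) 3)).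
exists (pow (Rmult 2 (Rmult C0 C0)) m), (N + 1)%N => n hn.
have n1 : (1 <= n)%N by lia.
have Hn : (4 * l n + 3 <= n)%N.
  apply: (@sizeN C0 (Rminus (Rinv (INR 2)) eps)) => //.
    simpl INR; lra.
  apply: Rlt_le; apply: Rlt_le_trans hN _; apply: le_INR; apply/leP; lia.
exists (fun _ => Dd (n:=n) (l n).+1), (gdec n (l n) (m:=m)); split.
  by move=> _; apply: D_uu; lia.
move=> x; apply: Rle_trans _ (main_prob m x Hn).
have := qbound (C0:=C0) (L:=l n) he hc hm' n1 (hl n).
lra.
Qed.
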